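(* There is a universal constant $C>0$ and, for every positive integer $T$, a (randomized) forecasting algorithm for the $T$-step sequential binary prediction game such that against every (possibly adaptive and randomized) adversary, $\mathbb{E}[\mathsf{CalDist}(x,p)] \le C\sqrt{T}$, where $x$ is the sequence of outcomes and $p$ the sequence of predictions.
   Context: Sequential binary prediction game with horizon $T$: at each step $t \in [T]$, the adversary picks a bit $x_t \in \{0,1\}$ and simultaneously the forecaster picks a prediction $p_t \in [0,1]$; both may depend on all previous outcomes and predictions (and on their own randomness); then $x_t,p_t$ are revealed to both. For $x \in \{0,1\}^T$, let $\mathcal{C}(x) = \{q \in [0,1]^T : \sum_{t=1}^T (x_t - q_t)\mathbf{1}[q_t = \alpha] = 0 \text{ for all } \alpha \in [0,1]\}$, and $\mathsf{CalDist}(x,p) = \min_{q \in \mathcal{C}(x)} \|p - q\|_1$. The expectation is over the randomness of both players. *)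

(* Defs.v *)
From HB Require Import structures.
From mathcomp Require Import all_boot all_order all_algebra.
From mathcomp Require Import boolp classical_sets reals.
Unset Printing Implicit Defensive.
Import Order.TTheory GRing.Theory Num.Theory.
Local Open Scope ring_scope.
Local Open Scope classical_set_scope.

Section CalDist.
Variable R : realType.
Implicit Types (T : nat).

Definition calib_set (T : nat) (x : 'I_T -> bool) : set ('I_T -> R) :=
  [set q | (forall t, 0 <= q t <= 1) /\
           forall a : R, \sum_(t < T) ((x t)%:R - q t) * (q t == a)%:R = 0].

(* CalDist(x,p) = min_{q in C(x)} ||p - q||_1  (the min is attained: C(x) is
   finite and nonempty; we use the infimum, which equals it). *)
Definition CalDist (T : nat) (x : 'I_T -> bool) (p : 'I_T -> R) : R :=
  inf [set \sum_(t < T) `|p t - q t| | q in @calib_set T x].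

Definition history := seq (bool * R).

Definition hist_x (T : nat) (h : history) : 'I_T -> bool :=
  fun t => (nth (false, 0) h t).1.
Definition hist_p (T : nat) (h : history) : 'I_T -> R :=
  fun t => (nth (false, 0) h t).2.

(* Randomized forecaster (behavioural strategy): given the history, a finitely
   supported distribution over predictions, as a list of (weight, prediction). *)
Definition forecaster := history -> seq (R * R).

Definition valid_forecaster (F : forecaster) : Prop :=
  forall h : history,
    (forall wp, wp \in F h -> 0 <= wp.1 /\ 0 <= wp.2 <= 1) /\
    \sum_(wp <- F h) wp.1 = 1.

(* Randomized adaptive adversary (behavioural strategy): given the history,
   the probability of choosing x_t = 1. *)
Definition adversary := history -> R.

Definition valid_adversary (A : adversary) : Prop :=
  forall h : history, 0 <= A h <= 1.

(* Expected value of L(final history) when the game is played for n more steps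
   from history h; at each step x_t and p_t are drawn independently given h
   (simultaneous moves), then both are revealed. *)
Fixpoint play (F : forecaster) (A : adversary) (L : history -> R)
    (n : nat) (h : history) : R :=
  match n with
  | 0 => L h
  | n'.+1 =>
      \sum_(wp <- F h)
        wp.1 * (A h * play F A L n' (rcons h (true, wp.2)) +
                (1 - A h) * play F A L n' (rcons h (false, wp.2)))
  end.

Definition expected_CalDist (T : nat) (F : forecaster) (A : adversary) : R :=
  play F A (fun h => @CalDist T (hist_x T h) (hist_p T h)) T [::].

End CalDist.

(* Main.v *)
Require Import Defs.
From HB Require Import structures.
From mathcomp Require Import all_boot all_order all_algebra.
From mathcomp Require Import boolp classical_sets reals.
From mathcomp Require Import ring lra zify.
Import Order.TTheory GRing.Theory Num.Theory.
Local Open Scope ring_scope.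

Section Bound.
Variable R : realType.

Lemma sum_ind (n g : nat) (F : nat -> R) : (g < n)%N ->
  \sum_(k < n) (g == k)%:R * F k = F g.
Proof.
move=> gn; rewrite (bigD1 (Ordinal gn)) //= eqxx mul1r big1 ?addr0 //.
move=> k /negP nk; case: eqP => [e|]; last by rewrite mul0r.
by exfalso; apply: nk; apply/eqP/val_inj; rewrite /= e.
Qed.

Lemma caldist_bound T (x : 'I_T -> bool) (p : 'I_T -> R) (g : 'I_T -> nat)
  (M : nat) (v : nat -> R) : (forall t, g t < M)%N ->
  @CalDist R T x p <= \sum_(t < T) `|p t - v (g t)| +
     \sum_(k < M) `|\sum_(t < T) (g t == k)%:R * ((x t)%:R - v k)|.
Proof.
move=> gM.
pose S (k : nat) : R := \sum_(t < T) (g t == k)%:R * (x t)%:R.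
pose N (k : nat) : R := \sum_(t < T) (g t == k)%:R.
pose mu (k : nat) : R := S k / N k.
have S0 k : 0 <= S k by apply: sumr_ge0 => t _; rewrite mulr_ge0 // ler0n.
have SN k : S k <= N k.
  apply: ler_sum => t _; case: (g t == k); last by rewrite !mul0r.
  by rewrite mul1r; case: (x t).
have NS k : N k * mu k = S k.
  rewrite /mu; have [N0|N0] := eqVneq (N k) 0.
    by rewrite N0 mul0r; apply/eqP; rewrite eq_le S0 /= -N0 SN.
  by rewrite mulrC divfK.
have mu01 k : 0 <= mu k <= 1.
  rewrite /mu; have [->|N0] := eqVneq (N k) 0; first by rewrite invr0 mulr0 lexx ler01.
  have Np : 0 < N k by rewrite lt_def N0 (le_trans (S0 k) (SN k)).
  by rewrite divr_ge0 ?(le_trans (S0 k) (SN k)) //= ler_pdivrMr // mul1r.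
pose q t := mu (g t).
have qC : @calib_set R T x q.
  split; first by move=> t; exact: mu01.
  move=> a.
  transitivity (\sum_(t < T) \sum_(k < M) (g t == k)%:R * (((x t)%:R - mu k) * (mu k == a)%:R)).
    by apply: eq_bigr => t _; rewrite (@sum_ind M (g t) (fun k => ((x t)%:R - mu k) * (mu k == a)%:R) (gM t)).
  rewrite exchange_big /= big1 // => k _.
  transitivity (\sum_(t < T) (g t == k)%:R * (x t)%:R * (mu k == a)%:R - N k * mu k * (mu k == a)%:R).
    rewrite /N !mulr_suml -sumrB; apply: eq_bigr => t _; ring.
  by rewrite NS /S mulr_suml subrr.
apply: le_trans (_ : \sum_(t < T) `|p t - q t| <= _).
  apply: ge_inf; last by exists q.
  exists 0 => y [q' _ <-]; exact: sumr_ge0.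
apply: le_trans (_ : \sum_(t < T) (`|p t - v (g t)| + `|v (g t) - q t|) <= _).
  by apply: ler_sum => t _; rewrite (le_trans _ (ler_normD _ _)) // addrA subrK.
rewrite big_split lerD2l.
have -> : \sum_(t < T) `|v (g t) - q t| = \sum_(t < T) \sum_(k < M) (g t == k)%:R * `|v k - mu k|.
  by apply: eq_bigr => t _; rewrite (@sum_ind M (g t) (fun k => `|v k - mu k|) (gM t)).
rewrite exchange_big /=; apply: ler_sum => k _.
rewrite le_eqVlt; apply/orP; left; apply/eqP.
transitivity (`|N k * v k - N k * mu k|).
  rewrite -mulrBr normrM ger0_norm; last exact: le_trans (S0 k) (SN k).
  by rewrite /N mulr_suml.
rewrite NS -normrN opprB; congr `|_|.
rewrite /S /N mulr_suml -sumrB; apply: eq_bigr => t _; ring.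
Qed.

Section Algo.
Variable m : nat.
Hypothesis m0 : (0 < m)%N.

Definition v (k : nat) : R := k%:R / m%:R.
Definition upd (c : nat -> R) (k : nat) (d : R) : nat -> R :=
  fun j => if j == k then c j + d else c j.
Definition choose (c : nat -> R) : nat := find (fun i => c i.+1 <= 0) (iota 0 m).
Definition grp (c : nat -> R) (b : bool) : nat :=
  if b then (choose c).+1 else choose c.
Definition step (c : nat -> R) (b : bool) : nat -> R :=
  upd c (grp c b) (b%:R - v (grp c b)).
Definition cs (bs : seq bool) : nat -> R := foldl step (fun _ => 0) bs.
Definition predf (bs : seq bool) : R := v (choose (cs bs)).
Definition Fm : forecaster R := fun h => [:: (1, predf (map fst h))].

Definition inv (c : nat -> R) :=
  (forall k, -1 <= c k <= 1) /\ 0 <= c 0%N /\ c m <= 0.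

Lemma v01 k : (k <= m)%N -> 0 <= v k <= 1.
Proof.
move=> km; have mp : 0 < m%:R :> R by rewrite ltr0n.
rewrite /v divr_ge0 ?ler0n //= ler_pdivrMr // mul1r ler_nat //.
Qed.

Lemma v0 : v 0 = 0. Proof. by rewrite /v mul0r. Qed.
Lemma vm : v m = 1. Proof. by rewrite /v divff // pnatr_eq0 -lt0n. Qed.
Lemma vS i : v i.+1 = v i + 1 / m%:R.
Proof. by rewrite /v -natr1 mulrDl. Qed.

Lemma choose_props (c : nat -> R) : inv c ->
  [/\ (choose c < m)%N, c (choose c).+1 <= 0 & 0 <= c (choose c)].
Proof.
move=> [cb [c0 cm]].
have hh : has (fun i => c i.+1 <= 0) (iota 0 m).
  apply/hasP; exists m.-1; first by rewrite mem_iota add0n prednK // leqnn andbT.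
  by rewrite prednK.
have lt : (choose c < m)%N by move: hh; rewrite has_find size_iota.
split => //.
  have := nth_find 0%N hh; rewrite -/(choose c) nth_iota //.
case E: (choose c) => [|j] //.
have jl : (j < choose c)%N by rewrite E.
have := before_find 0%N jl; rewrite nth_iota ?add0n; last by rewrite -E ltnW.
by move/negbT; rewrite -ltNge => /ltW.
Qed.

Lemma step_inv c b : inv c -> inv (step c b).
Proof.
move=> ic; have [lt cS cc] := choose_props c ic.
move: ic => [cb [c0 cm]].
rewrite /step /grp /upd; case: b => /=.
- have [v0' v1'] := andP (v01 _ lt).
  split; [move=> k|split].
  + case: eqP => [->|_] //; have := cb (choose c).+1; move=> /andP[? ?].
    apply/andP; split; lra.
  + by rewrite /=.
  + case: eqP => [e|_] //; rewrite -e vm; lra.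
- have [v0' v1'] := andP (v01 _ (ltnW lt)).
  split; [move=> k|split].
  + case: eqP => [->|_] //; have := cb (choose c); move=> /andP[? ?].
    apply/andP; split; lra.
  + case: eqP => [e|_] //; rewrite -e v0; lra.
  + case: eqP => [e|_] //; by move: lt; rewrite -e ltnn.
Qed.

Lemma cs_inv bs : inv (cs bs).
Proof.
rewrite /cs; have : inv (fun _ => 0).
  by split; [move=> k; apply/andP; split; lra | split].
elim: bs (fun _ : nat => 0 : R) => //= b bs IH c ic; apply: IH; exact: step_inv.
Qed.

Lemma cs_sum (bs : seq bool) t k : (t <= size bs)%N ->
  cs (take t bs) k = \sum_(s < t) (grp (cs (take s bs)) (nth false bs s) == k)%:R
                         * ((nth false bs s)%:R - v k).
Proof.
elim: t => [|t IH] tl; first by rewrite take0 big_ord0.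
rewrite big_ord_recr /= -IH ?(ltnW tl) // (take_nth false tl).
rewrite /cs -cats1 foldl_cat /= -/(cs (take t bs)) /step /upd.
set g := grp _ _.
case: eqP => [e|ne]; first by rewrite eq_sym e eqxx mul1r.
by case: eqP => [e'|]; [exfalso; apply: ne; rewrite e' | rewrite mul0r addr0].
Qed.


Definition cons_ok (h : history R) :=
  forall t, (t < size h)%N -> (nth (false, 0) h t).2 = predf (take t (map fst h)).

Lemma core T (h : history R) : cons_ok h -> size h = T ->
  @CalDist R T (@hist_x R T h) (@hist_p R T h) <= T%:R / m%:R + (m.+1)%:R.
Proof.
move=> ok sz.
set bs := map fst h.
have szb : size bs = T by rewrite size_map.
pose g (t : nat) := grp (cs (take t bs)) (nth false bs t).
have gM : forall t : 'I_T, (g t < m.+1)%N.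
  move=> t; have [lt _ _] := choose_props _ (cs_inv (take t bs)).
  by rewrite /g /grp; case: (nth false bs t) => //; rewrite ltnS ltnW.
apply: le_trans (@caldist_bound T (@hist_x R T h) (@hist_p R T h) (fun t : 'I_T => g t) m.+1 v gM) _.
apply: lerD.
  apply: le_trans (_ : \sum_(t < T) 1 / m%:R <= _).
    apply: ler_sum => t _.
    have tl : (t < size h)%N by rewrite sz.
    rewrite /hist_p ok // /predf /g /grp -/bs.
    case: (nth false bs t); last by rewrite subrr normr0 divr_ge0 ?ler0n.
    rewrite vS opprD addrA subrr add0r normrN ger0_norm //.
    by rewrite divr_ge0 ?ler0n.
  by rewrite sumr_const card_ord div1r [X in _ <= X]mulr_natl.
apply: le_trans (_ : \sum_(k < m.+1) 1 <= _); last by rewrite sumr_const card_ord.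
apply: ler_sum => k _.
have -> : \sum_(t < T) (g t == k)%:R * ((@hist_x R T h t)%:R - v k) = cs (take T bs) k.
  rewrite cs_sum ?szb //; apply: eq_bigr => t _.
  have tl : (t < size h)%N by rewrite sz.
  by rewrite /hist_x -(nth_map (false, 0) false fst tl).
have [cb _] := cs_inv (take T bs).
by rewrite ler_norml cb.
Qed.


Lemma Fm_valid : @valid_forecaster R Fm.
Proof.
move=> h; split; last by rewrite big_seq1.
move=> wp; rewrite mem_seq1 => /eqP -> /=; split; first exact: ler01.
have [lt _ _] := choose_props _ (cs_inv (map fst h)).
exact: v01 _ (ltnW lt).
Qed.

Lemma play_le (A : adversary R) (L : history R -> R) (B : R) T :
  @valid_adversary R A -> (forall h, cons_ok h -> size h = T -> L h <= B) ->
  forall n h, cons_ok h -> (size h + n)%N = T -> @play R Fm A L n h <= B.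
Proof.
move=> vA hL; elim=> [|n IH] h ok sz /=.
  by apply: hL; rewrite // -sz addn0.
rewrite big_seq1 /= mul1r.
set pr := predf (map fst h).
have ok' b : cons_ok (rcons h (b, pr)).
  move=> t; rewrite size_rcons ltnS leq_eqVlt => /orP[/eqP->|lt].
    rewrite nth_rcons ltnn eqxx /= map_rcons -cats1 take_size_cat //.
    by rewrite size_map.
  rewrite nth_rcons lt ok // map_rcons -cats1 takel_cat //.
  by rewrite size_map ltnW.
have sz' b : (size (rcons h (b, pr)) + n)%N = T by rewrite size_rcons addSnnS.
have h1 := IH _ (ok' true) (sz' true).
have h2 := IH _ (ok' false) (sz' false).
have [a0 a1] := andP (vA h).
apply: le_trans (_ : A h * B + (1 - A h) * B <= B).
  by apply: lerD; apply: ler_wpM2l => //; lra.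
by rewrite -mulrDl addrC subrK mul1r.
Qed.

End Algo.

Lemma sqrt_ex T : exists m, (m * m <= T < m.+1 * m.+1)%N.
Proof.
elim: T => [|T [m /andP[h1 h2]]]; first by exists 0%N.
case: (ltnP T.+1 (m.+1 * m.+1)) => h3.
  by exists m; rewrite h3 andbT ltnW // ltnS.
exists m.+1; apply/andP; split => //.
have e : (m.+1 * m.+1 = T.+1)%N by apply/eqP; rewrite eqn_leq h3 h2.
rewrite -e; rewrite ltn_mul //.
Qed.

End Bound.

Theorem theorem3 (R : realType) :
  exists C : R, 0 < C /\
    forall T : nat, (0 < T)%N ->
      exists F : forecaster R, @valid_forecaster R F /\
        forall A : adversary R, @valid_adversary R A ->
          @expected_CalDist R T F A <= C * Num.sqrt (T%:R).
Proof.
exists 6; split; first by lra.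
move=> T T0.
have [m /andP[h1 h2]] := sqrt_ex T.
have m0 : (0 < m)%N by case: m h1 h2 T0 => // _; case: T.
exists (Fm R m); split; first exact: (@Fm_valid R m m0).
move=> A vA.
apply: le_trans (_ : T%:R / m%:R + (m.+1)%:R <= _).
  rewrite /expected_CalDist.
  apply: (@play_le R m A _ _ T vA _ T [::]) => //.
  move=> h ok sz; exact: (@core R m m0 T h ok sz).
have mR : 1 <= m%:R :> R by rewrite ler1n.
have msq : m%:R <= Num.sqrt T%:R :> R.
  rewrite -[X in X <= _](@ger0_norm _ m%:R) ?ler0n // -sqrtr_sqr.
  by apply: ler_wsqrtr; rewrite -natrX ler_nat expnS expn1.
have Tm : (T <= 4 * m * m)%N by nia.
have TmR : T%:R / m%:R <= 4 * m%:R :> R.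
  rewrite ler_pdivrMr ?ltr0n //.
  by move: Tm; rewrite -(ler_nat R) !natrM.
rewrite -natr1; lra.
Qed.
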